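(* Let $x,y\in V(D^+)$ with $y\prec x$. If $d_s(I_s(x))<d_s(y)$, then $I_s(x)\prec y$. If $d_s(I_t(y))>d_s(x)$, then $x\prec I_t(y)$.
   Context: $G=(V,E,w)$ is a simple, connected, undirected graph with positive edge lengths, $s,t\in V$, and $d(\cdot,\cdot)$ is the shortest path distance in $G$; $d_s(v)=d(s,v)$, $d_t(v)=d(v,t)$. $D$ is the union of all shortest $st$-paths of $G$, and $D^+$ is the directed acyclic graph obtained from $D$ by orienting every edge toward $t$. For $x,y\in V(D^+)$, $x\prec y$ means $x$ is an ancestor of $y$ in $D^+$ (a directed path of positive length from $x$ to $y$ exists), and $x\preceq y$ means $x\prec y$ or $x=y$. For $x\neq s$, $v\neq x$ is an $s$-dominator of $x$ if every directed path from $s$ to $x$ in $D^+$ contains $v$, and $I_s(x)$ is the $s$-dominator of $x$ closest to $x$ (every other $s$-dominator of $x$ is an $s$-dominator of $I_s(x)$). Symmetrically, for $x\neq t$, $v\neq x$ is a $t$-dominator of $x$ if every directed path from $x$ to $t$ in $D^+$ contains $v$, and $I_t(x)$ is the $t$-dominator of $x$ closest to $x$. *)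

(* Defs.v *)
From mathcomp Require Import all_boot all_order all_algebra.
Set Implicit Arguments. Unset Strict Implicit. Unset Printing Implicit Defensive.
Import Order.TTheory GRing.Theory Num.Theory.
Local Open Scope ring_scope.

Section Defs.
Variables (T : finType) (R : realFieldType).
Variables (e : rel T) (w : T -> T -> R) (d : T -> T -> R) (s t : T).

Fixpoint wlen (x : T) (p : seq T) : R :=
  match p with [::] => 0 | y :: p' => w x y + wlen y p' end.

Definition is_sp_dist : Prop :=
  forall u v,
    (exists p, path e u p /\ last u p = v /\ wlen u p = d u v) /\
    (forall p, path e u p -> last u p = v -> d u v <= wlen u p).

Definition shortest_st_path (p : seq T) : Prop :=
  path e s p /\ last s p = t /\ wlen s p = d s t.

(* Vertices of D (= V(D^+)). *)
Definition inD (x : T) : Prop :=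
  exists p, shortest_st_path p /\ x \in s :: p.

(* Arcs of D^+: edges of D, each oriented toward t (i.e. in the direction
   in which it is traversed by a shortest st-path). *)
Definition Darc (a b : T) : Prop :=
  exists p, shortest_st_path p /\
    exists p1 p2, s :: p = p1 ++ a :: b :: p2.

Fixpoint dwalk (x : T) (q : seq T) : Prop :=
  match q with [::] => True | y :: q' => Darc x y /\ dwalk y q' end.

Definition prec (x y : T) : Prop :=
  exists q, q <> [::] /\ dwalk x q /\ last x q = y.

Definition s_dom (v x : T) : Prop :=
  v <> x /\ forall q, dwalk s q -> last s q = x -> v \in s :: q.

Definition t_dom (v x : T) : Prop :=
  v <> x /\ forall q, dwalk x q -> last x q = t -> v \in x :: q.

(* v = I_s(x): the s-dominator of x closest to x. *)
Definition is_Is (x v : T) : Prop :=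
  x <> s /\ s_dom v x /\ forall u, s_dom u x -> u <> v -> s_dom u v.

(* v = I_t(x): the t-dominator of x closest to x. *)
Definition is_It (x v : T) : Prop :=
  x <> t /\ t_dom v x /\ forall u, t_dom u x -> u <> v -> t_dom u v.

End Defs.

(* Main.v *)
Require Import Defs.
From mathcomp Require Import all_boot all_order all_algebra.
From mathcomp Require Import lra.
Import Order.TTheory GRing.Theory Num.Theory.
Local Open Scope ring_scope.
Set Implicit Arguments. Unset Strict Implicit.

Section Aux.
Variables (T : finType) (R : realFieldType).
Variables (e : rel T) (w : T -> T -> R) (d : T -> T -> R) (s t : T).

Lemma wlen_cat x p q : wlen w x (p ++ q) = wlen w x p + wlen w (last x p) q.
Proof. elim: p x => [|y p IH] x /=; first by rewrite add0r. by rewrite IH addrA. Qed.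

Lemma dwalk_cat x p q : dwalk e w d s t x (p ++ q) <->
  dwalk e w d s t x p /\ dwalk e w d s t (last x p) q.
Proof.
elim: p x => [|y p IH] x /=; first by split => // [[]].
rewrite IH; split; [by case=> ? []|by case=> [[? ?] ?]].
Qed.

Lemma dwalk_pre x q v : dwalk e w d s t x q -> v \in q ->
  exists q1, q1 <> [::] /\ dwalk e w d s t x q1 /\ last x q1 = v.
Proof.
move=> H Hv; move: H; case/splitPr: Hv => q0 q2.
rewrite -cat_rcons -cats1 => /dwalk_cat [H1 _].
exists (q0 ++ [:: v]); split; first by case: q0 {H1}.
by rewrite last_cat.
Qed.

Lemma dwalk_suf x q v : dwalk e w d s t x q -> v \in q ->
  exists q2, dwalk e w d s t v q2 /\ last v q2 = last x q.
Proof.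
move=> H Hv; move: H; case/splitPr: Hv => q0 q2.
rewrite -cat_rcons -cats1 => /dwalk_cat [_ H2].
exists q2; rewrite last_cat !last_cat /=; split => //.
by move: H2; rewrite last_cat.
Qed.

Hypothesis wpos : forall u v, e u v -> 0 < w u v.
Hypothesis sp : is_sp_dist e w d.

Lemma sp_prefix p r r' : shortest_st_path e w d s t p -> p = r ++ r' ->
  d s (last s r) = wlen w s r.
Proof.
move=> [Hp [Hl Hw]] E; subst p.
move: Hp; rewrite cat_path => /andP [Hr Hr'].
rewrite last_cat in Hl. rewrite wlen_cat in Hw.
have [[q [Hq [Hql Hqw]]] Hle] := sp s (last s r).
have Hle1 := Hle r Hr erefl.
have [_ Hst] := sp s t.
have H2 : d s t <= wlen w s (q ++ r').
  apply: Hst; first by rewrite cat_path Hq Hql Hr'.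
  by rewrite last_cat Hql.
rewrite wlen_cat Hql Hqw in H2. lra.
Qed.

Lemma Darc_lt a b : Darc e w d s t a b -> d s a < d s b.
Proof.
move=> [p [Hsp [p1 [p2 E]]]].
have Hp := Hsp.1.
case: p1 E => [|c p1'] /= [Ec Ep].
- subst a p.
  have H0 := sp_prefix Hsp (erefl : b :: p2 = [::] ++ b :: p2).
  have H1 := sp_prefix Hsp (erefl : b :: p2 = [:: b] ++ p2).
  rewrite /= in H0 H1. rewrite H0 H1 addr0.
  by apply: wpos; move: Hp => /= /andP [].
- subst c p.
  have E1 : p1' ++ [:: a, b & p2] = rcons p1' a ++ b :: p2 by rewrite cat_rcons.
  have E2 : p1' ++ [:: a, b & p2] = rcons (rcons p1' a) b ++ p2
    by rewrite !cat_rcons.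
  have H0 := sp_prefix Hsp E1; have H1 := sp_prefix Hsp E2.
  rewrite !last_rcons in H0 H1.
  rewrite H0 H1 -[rcons (rcons p1' a) b]cats1 wlen_cat last_rcons /= addr0 ltrDl.
  apply: wpos; move: Hp; rewrite cat_path => /andP [_ /=].
  by case/and3P.
Qed.

Lemma dwalk_lt x q v : dwalk e w d s t x q -> v \in q -> d s x < d s v.
Proof.
elim: q x => [|y q IH] x //= [Ha Hw]; rewrite in_cons => /orP [/eqP ->|Hv].
  exact: Darc_lt.
apply: lt_trans (Darc_lt Ha) (IH _ Hw Hv).
Qed.

Lemma prec_lt a b : prec e w d s t a b -> d s a < d s b.
Proof.
move=> [q [Hn [Hw Hl]]]; apply: (dwalk_lt Hw); rewrite -Hl.
by case: q Hn {Hw Hl} => // c q _ /=; exact: mem_last.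
Qed.

Lemma sp_dwalk p : shortest_st_path e w d s t p -> dwalk e w d s t s p.
Proof.
move=> Hsp.
suff H : forall r r', p = r ++ r' -> dwalk e w d s t s r.
  by apply: (H p [::]); rewrite cats0.
elim/last_ind => [|r c IH] r' E //.
rewrite -cats1; apply/dwalk_cat; split.
  by apply: (IH (c :: r')); rewrite E cat_rcons.
split => //; exists p; split => //.
exists (belast s r), r'.
by rewrite E -(cat_rcons (last s r)) -lastI cat_rcons.
Qed.

End Aux.

Lemma ltC_F (R : realFieldType) (a b : R) : a < b -> b < a -> False.
Proof. by move=> H1 H2; move: (lt_trans H1 H2); rewrite ltxx. Qed.

Theorem corollary1 (T : finType) (R : realFieldType)
    (e : rel T) (w : T -> T -> R) (d : T -> T -> R) (s t : T) :
  symmetric e -> irreflexive e ->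
  (forall u v, connect e u v) ->
  (forall u v, w u v = w v u) ->
  (forall u v, e u v -> 0 < w u v) ->
  is_sp_dist e w d ->
  forall x y : T, inD e w d s t x -> inD e w d s t y ->
    prec e w d s t y x ->
    (forall ix, is_Is e w d s t x ix ->
       d s ix < d s y -> prec e w d s t ix y) /\
    (forall iy, is_It e w d s t y iy ->
       d s iy > d s x -> prec e w d s t x iy).
Proof.
move=> _ _ _ _ wpos sp x y [px [Hpx Hxin]] [py [Hpy Hyin]] Hyx.
have Hyx' := Hyx; move: Hyx' => [qyx [Hn [Hwyx Hlyx]]].
split.
- move=> ix [_ [[_ Hdom] _]] Hlt.
  have [qy [Hqy Hlqy]] : exists qy, dwalk e w d s t s qy /\ last s qy = y.
    move: Hyin; rewrite in_cons => /orP [/eqP ->|Hy]; first by exists [::].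
    have [q1 [_ ?]] := dwalk_pre (sp_dwalk Hpy) Hy; by exists q1.
  have Hm : ix \in s :: (qy ++ qyx).
    apply: Hdom; first by apply/dwalk_cat; rewrite Hlqy.
    by rewrite last_cat Hlqy.
  rewrite -cat_cons mem_cat in Hm; case/orP: Hm => Hm.
  + rewrite in_cons in Hm; case/orP: Hm => [/eqP Eix|Hm].
    * subst ix. exists qy; split => //. move=> E; subst qy.
      rewrite /= in Hlqy; subst y; by rewrite ltxx in Hlt.
    * have [q2 [Hw2 Hl2]] := dwalk_suf Hqy Hm.
      exists q2; split => //; last by rewrite Hl2.
      move=> E; subst q2; rewrite /= Hlqy in Hl2; subst ix.
      by rewrite ltxx in Hlt.
  + have := dwalk_lt wpos sp Hwyx Hm => H; exfalso; exact: ltC_F H Hlt.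
- move=> iy [_ [[Hne Hdom] _]] Hgt.
  have [qxt [Hqxt Hlqxt]] : exists q, dwalk e w d s t x q /\ last x q = t.
    move: Hxin; rewrite in_cons => /orP [/eqP ->|Hx].
      by exists px; split; [exact: sp_dwalk|case: Hpx => _ []].
    have [q2 [? Hl]] := dwalk_suf (sp_dwalk Hpx) Hx.
    by exists q2; split => //; rewrite Hl; case: Hpx => _ [].
  have Hm : iy \in y :: (qyx ++ qxt).
    apply: Hdom; first by apply/dwalk_cat; rewrite Hlyx.
    by rewrite last_cat Hlyx.
  have Hyxlt := prec_lt wpos sp Hyx.
  rewrite -cat_cons mem_cat in Hm; case/orP: Hm => Hm.
  + exfalso; rewrite in_cons in Hm; case/orP: Hm => [/eqP E|Hm].
      subst iy; exact: ltC_F Hgt Hyxlt.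
    have [q2 [Hw2 Hl2]] := dwalk_suf Hwyx Hm.
    rewrite Hlyx in Hl2.
    case: q2 Hw2 Hl2 => [|c q2] Hw2 Hl2.
      rewrite /= in Hl2; subst iy; by rewrite ltxx in Hgt.
    have : prec e w d s t iy x by exists (c :: q2).
    move/(prec_lt wpos sp) => H; exact: ltC_F H Hgt.
  + have [q1 ?] := dwalk_pre Hqxt Hm; by exists q1.
Qed.
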